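(* Let $G$ be a finite multigraph (no loops), let $\ell \geq 4$ be an integer, let $s$ be a vertex of $G$, and let $A \subsetneq V(G)$ with $s \notin A$ be such that $\lambda_G(x,y) \geq \ell$ for any two distinct $x,y\in A$ and such that no edge of $G$ has both endvertices outside $A$. Let $F_1$ and $F_2$ be independent sets in $L(G,s,\tau_A)$ of sizes $r_1$ and $r_2$ respectively, and suppose there are dangerous sets $D_1$ and $D_2$ such that $F_i = \delta(\{s\}) \cap \delta(D_i)$ for $i=1,2$. Set $\alpha = |F_1 \cap F_2|$. If $\alpha > 0$, $r_1 > \alpha$, $r_2 > \alpha$, and $V(G) \setminus (D_1 \cup D_2 \cup \{s\})$ contains a vertex of $A$, then $r_1 + r_2 \leq \lfloor \deg(s)/2 \rfloor + 2$.
   Context: $\lambda_G(x,y)$ is the maximum number of pairwise edge-disjoint $x$–$y$ paths in $G$; $\delta(X)$ is the set of edges with exactly one endvertex in $X$. Lifting two distinct edges $sx,sy$ means deleting them and adding a new edge $xy$. The target function $\tau_A$ assigns $\ell$ to pairs of vertices both in $A$ and $0$ otherwise; a pair of edges at $s$ is $\tau_A$-admissible if after lifting them the new graph $G'$ satisfies $\lambda_{G'}(x,y)\ge\tau_A(x,y)$ for all distinct $x,y\in V(G)\setminus\{s\}$. The lifting graph $L(G,s,\tau_A)$ has as vertices the edges incident with $s$, two being adjacent iff they form a $\tau_A$-admissible pair. A set $D \subseteq V(G)\setminus\{s\}$ is dangerous if both $D$ and $V(G)\setminus(D\cup\{s\})$ contain vertices of $A$ and $|\delta_G(D)| \leq \ell+1$.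 *)

(* Defs.v *)
From mathcomp Require Import all_boot all_order.
Set Implicit Arguments. Unset Strict Implicit. Unset Printing Implicit Defensive.

(* Parallel
   edges are distinct entries with the same endpoints. *)
Definition mgraph (V : finType) := seq (V * V).

Definition edge_at (V : finType) (g : mgraph V) (e : 'I_(size g)) : V * V :=
  tnth (in_tuple g) e.

Definition loopless (V : finType) (g : mgraph V) : Prop :=
  forall e : 'I_(size g), (edge_at e).1 != (edge_at e).2.

Definition joins (V : finType) (g : mgraph V) (k : nat) (u v : V) : bool :=
  (k < size g) &&
  (match nth None (map Some g) k with
   | Some p => ((p.1 == u) && (p.2 == v)) || ((p.1 == v) && (p.2 == u))
   | None => false end).

Definition is_path (V : finType) (g : mgraph V) (x y : V)
    (p : seq V * seq nat) : Prop :=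
  let: (vs, es) := p in
  [/\ size vs = (size es).+1, head x vs = x, last x vs = y, uniq vs &
      forall k, k < size es ->
        joins g (nth 0 es k) (nth x vs k) (nth x vs k.+1)].

(* lambda_G(x,y) >= k : there are k pairwise edge-disjoint x-y paths. *)
Definition lambda_ge (V : finType) (g : mgraph V) (x y : V) (k : nat) : Prop :=
  exists P : seq (seq V * seq nat),
    [/\ size P = k,
        forall i, i < k -> is_path g x y (nth ([::], [::]) P i) &
        forall i j, i < j -> j < k ->
          ~~ has (fun e => e \in (nth ([::], [::]) P j).2)
                 (nth ([::], [::]) P i).2].

Definition delta (V : finType) (g : mgraph V) (X : {set V}) : {set 'I_(size g)} :=
  [set e | ((edge_at e).1 \in X) != ((edge_at e).2 \in X)].

Definition deg (V : finType) (g : mgraph V) (s : V) : nat := #|delta g [set s]|.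

Definition other (V : finType) (s : V) (p : V * V) : V :=
  if p.1 == s then p.2 else p.1.

(* lifting edges e = s x and f = s y: delete them, add x y *)
Definition lift (V : finType) (g : mgraph V) (s : V) (e f : 'I_(size g)) : mgraph V :=
  map (fun k => nth (s, s) g k)
      (filter (fun k : nat => (k != nat_of_ord e) && (k != nat_of_ord f)) (iota 0 (size g)))
    ++ [:: (other s (edge_at e), other s (edge_at f))].

Definition tauA (V : finType) (A : {set V}) (l : nat) (x y : V) : nat :=
  if (x \in A) && (y \in A) then l else 0.

Definition admissible (V : finType) (g : mgraph V) (s : V) (A : {set V}) (l : nat)
    (e f : 'I_(size g)) : Prop :=
  [/\ e != f, e \in delta g [set s], f \in delta g [set s] &
      forall x y : V, x != y -> x != s -> y != s ->
        lambda_ge (lift s e f) x y (tauA A l x y)].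

(* F is an independent set of the lifting graph L(G,s,tau_A) *)
Definition independent_L (V : finType) (g : mgraph V) (s : V) (A : {set V}) (l : nat)
    (F : {set 'I_(size g)}) : Prop :=
  F \subset delta g [set s] /\
  forall e f, e \in F -> f \in F -> e != f -> ~ admissible s A l e f.

Definition dangerous (V : finType) (g : mgraph V) (s : V) (A : {set V}) (l : nat)
    (D : {set V}) : Prop :=
  [/\ s \notin D, D :&: A != set0, ~: (D :|: [set s]) :&: A != set0 &
      #|delta g D| <= l.+1].

(* Main.v *)
Require Import Defs.
From mathcomp Require Import all_boot all_order.
From mathcomp Require Import zify.
Set Implicit Arguments. Unset Strict Implicit. Unset Printing Implicit Defensive.

Lemma card_sum (T : finType) (S : {set T}) : #|S| = \sum_(e : T) (e \in S).
Proof.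
rewrite -sum1_card big_mkcond /=; apply: eq_bigr => e _; by case: (e \in S).
Qed.

Definition dlb (V : finType) (p q : V) (X : {set V}) := ((p \in X) != (q \in X)).

Lemma edge_ineq (V : finType) (D1 D2 : {set V}) (s p q : V) :
  s \notin D1 -> s \notin D2 ->
  dlb p q (D1 :&: D2) + dlb p q (D1 :\: D2) + dlb p q (D2 :\: D1) + dlb p q (~: (D1 :|: D2 :|: [set s]))
  + 2 * (dlb p q [set s] && dlb p q D1) + 2 * (dlb p q [set s] && dlb p q D2)
  <= 2 * dlb p q D1 + 2 * dlb p q D2 + dlb p q [set s].
Proof.
move=> h1 h2; rewrite /dlb !inE.
case: (eqVneq p s) => [->|ps]; case: (eqVneq q s) => [->|qs];
  rewrite ?(negbTE h1) ?(negbTE h2) ?eqxx //=;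
  case: (p \in D1); case: (p \in D2); case: (q \in D1); case: (q \in D2) => //.
Qed.

Lemma cross_idx (f : nat -> bool) n : f 0 -> ~~ f n -> exists j, [/\ j < n, f j & ~~ f j.+1].
Proof.
move=> f0; elim: n => [|n IH]; first by rewrite f0.
move=> fn; case fn': (f n); first by exists n.
have [j [jn fj fj1]] := IH (negbT fn'); exists j; split => //; exact: ltnW.
Qed.

Lemma path_cross (V : finType) (g : mgraph V) (X : {set V}) x y p :
  x \in X -> y \notin X -> is_path g x y p ->
  exists e : 'I_(size g), e \in delta g X /\ (nat_of_ord e \in p.2).
Proof.
case: p => vs es /= xX yX [hs hh hl _ hj].
have h0 : nth x vs 0 \in X by case: vs hs hh {hl hj} => //= a vs _ ->.
have h1 : nth x vs (size es) \notin X.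
  by rewrite -[size es]/((size es).+1.-1) -hs nth_last hl.
have [j [jn fj fj1]] := @cross_idx (fun k => nth x vs k \in X) (size es) h0 h1.
have := hj j jn; rewrite /joins => /andP [kl hm].
exists (Ordinal kl); split; last by rewrite /= mem_nth.
rewrite /delta inE /edge_at (tnth_nth (x, x)) /=.
move: hm; rewrite (nth_map (x, x)) //.
by case/orP => /andP [/eqP -> /eqP ->]; rewrite ?fj ?(negbTE fj1).
Qed.

Lemma cut_ge (V : finType) (g : mgraph V) (X : {set V}) x y k :
  x \in X -> y \notin X -> lambda_ge g x y k -> k <= #|delta g X|.
Proof.
move=> xX yX [P [sP hP hD]].
have: forall i : 'I_k, exists e : 'I_(size g),
    e \in delta g X /\ (nat_of_ord e \in (nth ([::], [::]) P i).2).
  move=> i; exact: path_cross xX yX (hP i (ltn_ord i)).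
case/fin_all_exists => f hf.
have finj : injective f.
  move=> i j eij; apply/eqP; apply/negPn/negP => nij.
  have key : forall a b : 'I_k, a < b -> f a = f b -> False.
    move=> a b ab fab; have := hD a b ab (ltn_ord b); apply/negP/negPn.
    apply/hasP; exists (nat_of_ord (f a)); first by case: (hf a).
    by rewrite fab; case: (hf b).
  case: (ltngtP i j) => [ij|ji|ij].
  - exact: key ij eij.
  - exact: key ji (esym eij).
  - by move: nij; rewrite (val_inj ij) eqxx.
have -> : k = #|f @: [set: 'I_k]| by rewrite card_imset // cardsT card_ord.
apply: subset_leq_card; apply/subsetP => e /imsetP [i _ ->]; by case: (hf i).
Qed.

Lemma other_end (V : finType) (g : mgraph V) (s : V) (A : {set V}) (e : 'I_(size g)) :
  s \notin A -> ((edge_at e).1 \in A) || ((edge_at e).2 \in A) ->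
  e \in delta g [set s] ->
  exists o, o \in A /\ forall X : {set V}, s \notin X -> (e \in delta g X) = (o \in X).
Proof.
move=> sA hA; rewrite /delta !inE.
case: (eqVneq (edge_at e).1 s) => [h1|h1]; case: (eqVneq (edge_at e).2 s) => [h2|h2] //= _.
- exists (edge_at e).2; split; first by move: hA; rewrite h1 (negbTE sA).
  by move=> X sX; rewrite inE h1 (negbTE sX); case: (_ \in X).
- exists (edge_at e).1; split; first by move: hA; rewrite h2 (negbTE sA) orbF.
  by move=> X sX; rewrite inE h2 (negbTE sX); case: (_ \in X).
Qed.

Lemma sum2 (I : Type) (r : seq I) (P : pred I) (F : I -> nat) :
  \sum_(i <- r | P i) 2 * F i = 2 * \sum_(i <- r | P i) F i.
Proof. by elim/big_rec2: _ => //= i y1 y2 _ ->; rewrite mulnDr. Qed.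

Lemma arith a b c d r1 r2 x y z l :
  a + b + c + d + (r1 + (r1 + 0)) + (r2 + (r2 + 0)) <= x + (x + 0) + (y + (y + 0)) + z ->
  l <= a -> l <= b -> l <= c -> l <= d -> x <= l.+1 -> y <= l.+1 -> r1 + r2 <= z./2 + 2.
Proof.
move=> S ha hb hc hd hx hy.
have h : (r1 + r2 - 2).*2 <= z by rewrite -addnn; lia.
rewrite -geq_half_double in h; lia.
Qed.

Theorem lemma4p3 (V : finType) (g : mgraph V) (l : nat) (s : V) (A : {set V})
    (F1 F2 : {set 'I_(size g)}) (D1 D2 : {set V}) :
  loopless g ->
  4 <= l ->
  A \proper [set: V] ->
  s \notin A ->
  (forall x y, x \in A -> y \in A -> x != y -> lambda_ge g x y l) ->
  (forall e : 'I_(size g), ((edge_at e).1 \in A) || ((edge_at e).2 \in A)) ->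
  independent_L s A l F1 ->
  independent_L s A l F2 ->
  dangerous g s A l D1 ->
  dangerous g s A l D2 ->
  F1 = delta g [set s] :&: delta g D1 ->
  F2 = delta g [set s] :&: delta g D2 ->
  0 < #|F1 :&: F2| ->
  #|F1 :&: F2| < #|F1| ->
  #|F1 :&: F2| < #|F2| ->
  (exists a, [/\ a \in A, a \notin D1, a \notin D2 & a != s]) ->
  #|F1| + #|F2| <= (deg g s)./2 + 2.
Proof.
move=> _ _ _ sA hlam hA _ _ [sD1 _ _ cD1] [sD2 _ _ cD2] eF1 eF2 h12 h1 h2 [a [aA aD1 aD2 as_]].
have cutA : forall (X : {set V}) x y, x \in X -> y \notin X -> x \in A -> y \in A ->
    l <= #|delta g X|.
  move=> X x y xX yX xA yA; apply: (cut_ge xX yX); apply: hlam => //.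
  by apply/eqP => exy; move: yX; rewrite -exy xX.
have [e12 He12] : exists e, e \in F1 :&: F2 by apply/set0Pn; rewrite -card_gt0.
have [o12 [o12A Ho12]] : exists o, o \in A /\ forall X : {set V}, s \notin X -> (e12 \in delta g X) = (o \in X).
  apply: other_end => //; move: He12; rewrite eF1 !inE; by case/andP => /andP [].
have o12D1 : o12 \in D1 by rewrite -Ho12 //; move: He12; rewrite eF1 !inE => /andP [/andP [_ ->]].
have o12D2 : o12 \in D2 by rewrite -Ho12 //; move: He12; rewrite eF2 !inE => /andP [_ /andP [_ ->]].
have [e1 [e1F1 e1F2]] : exists e, e \in F1 /\ e \notin F2.
  case: (pickP [pred e | (e \in F1) && (e \notin F2)]) => [e /andP [? ?]|hF]; first by exists e.
  exfalso; move: h1; rewrite ltnNge; apply/negP/negPn; apply: subset_leq_card.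
  apply/subsetP => e eF; rewrite inE eF /=; move: (hF e) => /= /negbT; by rewrite eF /= negbK.
have [e2 [e2F2 e2F1]] : exists e, e \in F2 /\ e \notin F1.
  case: (pickP [pred e | (e \in F2) && (e \notin F1)]) => [e /andP [? ?]|hF]; first by exists e.
  exfalso; move: h2; rewrite ltnNge; apply/negP/negPn; apply: subset_leq_card.
  apply/subsetP => e eF; rewrite inE eF /= andbT; move: (hF e) => /= /negbT; by rewrite eF /= negbK.
have [o1 [o1A Ho1]] : exists o, o \in A /\ forall X : {set V}, s \notin X -> (e1 \in delta g X) = (o \in X).
  apply: other_end => //; move: e1F1; rewrite eF1 !inE; by case/andP.
have [o2 [o2A Ho2]] : exists o, o \in A /\ forall X : {set V}, s \notin X -> (e2 \in delta g X) = (o \in X).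
  apply: other_end => //; move: e2F2; rewrite eF2 !inE; by case/andP.
have o1D1 : o1 \in D1 by rewrite -Ho1 //; move: e1F1; rewrite eF1 !inE => /andP [_ ->].
have o1D2 : o1 \notin D2.
  rewrite -Ho1 //; apply: contra e1F2 => h; rewrite eF2 inE h andbT.
  by move: e1F1; rewrite eF1 inE; case/andP.
have o2D2 : o2 \in D2 by rewrite -Ho2 //; move: e2F2; rewrite eF2 !inE => /andP [_ ->].
have o2D1 : o2 \notin D1.
  rewrite -Ho2 //; apply: contra e2F1 => h; rewrite eF1 inE h andbT.
  by move: e2F2; rewrite eF2 inE; case/andP.
have cI := cutA (D1 :&: D2) o12 a (ltac:(by rewrite !inE o12D1 o12D2)) (ltac:(by rewrite !inE (negbTE aD1))) o12A aA.
have cX := cutA (D1 :\: D2) o1 a (ltac:(by rewrite !inE o1D1 o1D2)) (ltac:(by rewrite !inE (negbTE aD1) andbF)) o1A aA.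
have cY := cutA (D2 :\: D1) o2 a (ltac:(by rewrite !inE o2D1 o2D2)) (ltac:(by rewrite !inE (negbTE aD2) andbF)) o2A aA.
have cW := cutA (~: (D1 :|: D2 :|: [set s])) a o12
  (ltac:(by rewrite !inE (negbTE aD1) (negbTE aD2) (negbTE as_))) (ltac:(by rewrite !inE o12D1)) aA o12A.
have dE : forall X, #|delta g X| = \sum_(e < size g) dlb (edge_at e).1 (edge_at e).2 X.
  by move=> X; rewrite card_sum; apply: eq_bigr => e _; rewrite inE.
have fE : forall X, #|delta g [set s] :&: delta g X| = \sum_(e < size g)
   (dlb (edge_at e).1 (edge_at e).2 [set s] && dlb (edge_at e).1 (edge_at e).2 X).
  by move=> X; rewrite card_sum; apply: eq_bigr => e _; rewrite /dlb !inE.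
have S := @leq_sum _ (index_enum (ordinal (size g))) xpredT _ _ (fun (e : 'I_(size g)) _ => edge_ineq (edge_at e).1 (edge_at e).2 sD1 sD2).
rewrite !big_split /= big1_eq in S.
rewrite -!dE -!fE -eF1 -eF2 in S.
exact: (arith S cI cX cY cW cD1 cD2).
Qed.
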